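(* Consider a finite-state, finite-action SMDP satisfying (M) that is weakly communicating, and let $f$ satisfy (F). Let $h$ be as below. Then the set $\mathcal{Q}_f=\{x:h(x)=0\}$ is Lyapunov stable for the ODE $\dot x(t)=h(x(t))$ with respect to $\|\cdot\|_\infty$. That is, for every $\epsilon>0$ there exists $\delta>0$ such that every solution starting within distance $\delta$ of $\mathcal{Q}_f$ remains within distance $\epsilon$ of $\mathcal{Q}_f$ for all $t\ge0$.
   Context: $\mathcal{S},\mathcal{A}$ are finite, $d=|\mathcal{S}\times\mathcal{A}|$, and $\mathbf{1}$ is the all-ones vector. For each $(s,a)$, $\mathbb{P}_{sa}$ is a Borel probability measure on $\mathcal{S}\times\mathbb{R}_+\times\mathbb{R}$, the joint law of (next state $S$, holding time $\tau$, reward $R$). (M): (i) for some $\epsilon>0$, $\mathbb{P}_{sa}(\tau\le\epsilon)<1$ for all $(s,a)$; (ii) $\mathbb{E}_{sa}\tau^2,\mathbb{E}_{sa}R^2<\infty$. Let $r_{sa}=\mathbb{E}_{sa}R$, $t_{sa}=\mathbb{E}_{sa}\tau>0$, and $p^a_{ss'}=\mathbb{P}_{sa}(S=s')$. The optimal reward rate is $r^*(s)=\sup_\pi\liminf_{t\to\infty}t^{-1}\mathbb{E}^\pi_s[\sum_{n=1}^{N_t}R_n]$, with $N_t$ the number of transitions by time $t$. Weakly communicating means there is a unique closed communicating class (each of its states reachable from every other under some policy, and no policy can leave it) and all other states are transient under every policy; then $r^*$ is a constant. $\mathcal{Q}$ is the set of $q$ with $q(s,a)=r_{sa}-t_{sa}r^*+\sum_{s'}p^a_{ss'}\max_{a'}q(s',a')$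 for all $(s,a)$. (F): $g$ is SISTr at $x$ if $c\mapsto g(x+c\mathbf{1})$ is strictly increasing and onto $\mathbb{R}$; (i) $f$ is Lipschitz and SISTr at every point; (ii) $f(cx)/c\to f_\infty(x)$ pointwise as $c\uparrow\infty$, with $f_\infty$ SISTr at $0$. $\mathcal{Q}_f=\{q\in\mathcal{Q}:f(q)=r^*\}$. Fix $\bar\alpha\in(0,\min t_{sa}]$ and let $h(q)=\mathcal{T}(q)-q-\bar\alpha f(q)$, where $$\mathcal{T}(q)(s,a)=\frac{\bar\alpha}{t_{sa}}\Big(r_{sa}+\sum_{s'}p^a_{ss'}\max_{a'}q(s',a')\Big)+\Big(1-\frac{\bar\alpha}{t_{sa}}\Big)q(s,a).$$ *)

(* Defs.v *)
From HB Require Import structures.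
From mathcomp Require Import all_boot all_order all_algebra.
From mathcomp Require Import all_classical all_reals all_analysis.
Set Implicit Arguments. Unset Strict Implicit. Unset Printing Implicit Defensive.
Import Order.TTheory GRing.Theory Num.Theory.
Import numFieldNormedType.Exports.
Local Open Scope classical_set_scope.
Local Open Scope ring_scope.

(* An SMDP kernel: for every (s,a) the joint law P_sa of (S, tau, R) on
   S x R x R.  Since S is finite with the discrete sigma-algebra, such a
   measure is the same thing as a family, indexed by the next state s',
   of (sub-)measures on R x R:  kern s a s' B = P_sa(S = s', (tau,R) in B). *)
Definition smdp_kernel (R : realType) (S A : finType) :=
  S -> A -> S -> {measure set (R * R) -> \bar R}.

Section SMDP.
Context {R : realType} {S A : finType} (P : smdp_kernel R S A).

Definition is_smdp_law : Prop :=
  (forall s a, (\sum_(s' : S) P s a s' setT = 1%:E)%E) /\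
  (forall s a s', P s a s' [set z | z.1 < 0] = 0%E).

Definition cond_M : Prop :=
  (exists eps : R, 0 < eps /\
     forall s a, (\sum_(s' : S) P s a s' [set z | (z.1 <= eps)%R] < 1%:E)%E) /\
  (forall s a s', (\int[P s a s']_z ((z.1) ^+ 2)%:E < +oo)%E) /\
  (forall s a s', (\int[P s a s']_z ((z.2) ^+ 2)%:E < +oo)%E).

Definition ptrans (s : S) (a : A) (s' : S) : R := fine (P s a s' setT).
Definition rmean (sa : S * A) : R :=
  \sum_(s' : S) fine (\int[P sa.1 sa.2 s']_z (z.2)%:E)%E.
Definition tmean (sa : S * A) : R :=
  \sum_(s' : S) fine (\int[P sa.1 sa.2 s']_z (z.1)%:E)%E.

Definition is_policy (d : S -> A -> R) : Prop :=
  (forall s a, 0 <= d s a) /\ (forall s, \sum_(a : A) d s a = 1).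
Definition policy_rel (d : S -> A -> R) : rel S :=
  fun s s' => 0 < \sum_(a : A) d s a * ptrans s a s'.
Definition reach (d : S -> A -> R) (s s' : S) : bool := connect (policy_rel d) s s'.
Definition transient (d : S -> A -> R) (s : S) : Prop :=
  exists s', reach d s s' /\ ~~ reach d s' s.

Definition closed_comm_class (C : {set S}) : Prop :=
  (exists s, s \in C) /\
  (forall s s', s \in C -> s' \in C ->
     exists d, is_policy d /\ reach d s s') /\
  (forall s a s', s \in C -> 0 < ptrans s a s' -> s' \in C).

Definition weakly_communicating : Prop :=
  exists C : {set S},
    closed_comm_class C /\
    (forall C', closed_comm_class C' -> C' = C) /\
    (forall s, s \notin C -> forall d, is_policy d -> transient d s).

End SMDP.

Section Vec.
Context {R : realType} {I : finType}.

Definition ones : I -> R := fun _ => 1.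
Definition vadd (x y : I -> R) : I -> R := fun i => x i + y i.
Definition vsub (x y : I -> R) : I -> R := fun i => x i - y i.
Definition vscale (c : R) (x : I -> R) : I -> R := fun i => c * x i.
Definition supnorm (x : I -> R) : R := \big[Num.max/0]_(i : I) `|x i|.

Definition SISTr (g : (I -> R) -> R) (x : I -> R) : Prop :=
  (forall c1 c2 : R, c1 < c2 ->
     g (vadd x (vscale c1 ones)) < g (vadd x (vscale c2 ones))) /\
  (forall y : R, exists c : R, g (vadd x (vscale c ones)) = y).

Definition cond_F (f : (I -> R) -> R) : Prop :=
  (exists L : R, forall x y, `|f x - f y| <= L * supnorm (vsub x y)) /\
  (forall x, SISTr f x) /\
  (exists finf : (I -> R) -> R,
     (forall x, (fun c : R => f (vscale c x) / c) @ +oo --> finf x) /\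
     SISTr finf (fun _ => 0)).

Definition ode_solution (F : (I -> R) -> (I -> R)) (x : R -> I -> R) : Prop :=
  forall i : I,
    (forall t : R, 0 < t -> is_derive t (1 : R) (fun u : R => x u i) (F (x t) i)) /\
    ((fun u : R => x u i) @ (0 : R)^'+ --> x 0 i).

End Vec.

Definition Top {R : realType} {S A : finType} (P : smdp_kernel R S A)
  (alpha : R) (q : S * A -> R) : S * A -> R :=
  fun sa => alpha / tmean P sa *
              (rmean P sa + \sum_(s' : S) ptrans P sa.1 sa.2 s' *
                              \big[Num.max/q (s', sa.2)]_(a' : A) q (s', a'))
            + (1 - alpha / tmean P sa) * q sa.

Definition hfield {R : realType} {S A : finType} (P : smdp_kernel R S A)
  (alpha : R) (f : (S * A -> R) -> R) (q : S * A -> R) : S * A -> R :=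
  fun sa => Top P alpha q sa - q sa - alpha * f q.

(* Main.v *)
Require Import Defs.
From HB Require Import structures.
From mathcomp Require Import all_boot all_order all_algebra.
From mathcomp Require Import all_classical all_reals all_analysis.
From mathcomp Require Import ring lra.
Import Order.TTheory GRing.Theory Num.Theory.
Import numFieldNormedType.Exports.
Local Open Scope classical_set_scope.
Local Open Scope ring_scope.
Set Implicit Arguments. Unset Strict Implicit. Unset Printing Implicit Defensive.
Section Sup.
Context {R : realType} {I : finType}.

Lemma supnorm_ge0 (v : I -> R) : 0 <= supnorm v.
Proof. by rewrite /supnorm; elim/big_ind: _ => // x y hx hy; rewrite le_max hx. Qed.

Lemma le_supnorm (v : I -> R) i : `|v i| <= supnorm v.
Proof.
rewrite /supnorm (bigD1 i) //= le_max lexx //.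
Qed.

Lemma supnorm_le (v : I -> R) b : 0 <= b -> (forall i, `|v i| <= b) -> supnorm v <= b.
Proof.
move=> b0 H; rewrite /supnorm; elim/big_ind: _ => // x y hx hy.
by rewrite ge_max hx hy.
Qed.

Lemma supnorm_lt (v : I -> R) b : 0 < b -> (forall i, `|v i| < b) -> supnorm v < b.
Proof.
move=> b0 H; rewrite /supnorm; elim/big_ind: _ => // x y hx hy.
by rewrite gt_max hx hy.
Qed.

Lemma bigmax_ub (J : finType) (F : J -> R) x0 j : F j <= \big[Num.max/x0]_(k : J) F k.
Proof. by rewrite (bigD1 j) //= le_max lexx. Qed.

Lemma bigmax_ex (J : finType) (F : J -> R) j :
  exists k, \big[Num.max/F j]_(k : J) F k = F k.
Proof.
elim/big_ind: _; first by exists j.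
  move=> x y [k1 ->] [k2 ->]; rewrite /Num.max; case: ifP => _; by [exists k2|exists k1].
by move=> k _; exists k.
Qed.

Lemma bigmax_le (J : finType) (F : J -> R) j b :
  (forall k, F k <= b) -> \big[Num.max/F j]_(k : J) F k <= b.
Proof. by move=> H; have [k ->] := bigmax_ex F j. Qed.

End Sup.
Lemma sum_ge_term {R : realType} (J : finType) (F : J -> R) j :
  (forall k, 0 <= F k) -> F j <= \sum_(k : J) F k.
Proof.
move=> H; rewrite (bigD1 j) //= lerDl; apply: sumr_ge0 => k _; exact: H.
Qed.

Lemma ex_argmax {R : realType} (J : finType) (F : J -> R) (j : J) :
  exists k, forall k', F k' <= F k.
Proof.
have [k Hk] := bigmax_ex F j; exists k => k'; rewrite -Hk; exact: bigmax_ub.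
Qed.

Lemma ex_argmin {R : realType} (J : finType) (F : J -> R) (j : J) :
  exists k, forall k', F k <= F k'.
Proof.
have [k Hk] := ex_argmax (fun x => - F x) j; exists k => k'.
by rewrite -lerN2; exact: Hk.
Qed.

Section MDP.
Context {R : realType} {S A : finType} (P : smdp_kernel R S A).
Hypothesis HP : is_smdp_law P.

Lemma ptrans_ge0 s a s' : 0 <= ptrans P s a s'.
Proof. by rewrite /ptrans fine_ge0 // measure_ge0. Qed.

Lemma ptrans_sum1 s a : \sum_(s' : S) ptrans P s a s' = 1.
Proof.
have H := HP.1 s a.
have fin : forall s', P s a s' setT \is a fin_num.
  move=> s'; have : (\sum_(s'0 : S) P s a s'0 setT)%E \is a fin_num by rewrite H.
  by move/sum_fin_numP; apply => //; rewrite mem_index_enum.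
rewrite /ptrans sum_fine; last by move=> i _; exact: fin.
by rewrite H.
Qed.

Definition Vm (q : S * A -> R) (s : S) (a0 : A) := \big[Num.max/q (s, a0)]_(a : A) q (s, a).

Lemma Vm_ub q s a0 a : q (s, a) <= Vm q s a0.
Proof. exact: (bigmax_ub (fun a => q (s, a))). Qed.

Lemma Vm_indep q s a0 a1 : Vm q s a0 = Vm q s a1.
Proof.
apply/eqP; rewrite eq_le; apply/andP; split.
  by rewrite {1}/Vm; apply: (@bigmax_le R A (fun a => q (s, a))) => k; exact: Vm_ub.
by rewrite {1}/Vm; apply: (@bigmax_le R A (fun a => q (s, a))) => k; exact: Vm_ub.
Qed.

Lemma Vm_ex q s a0 : exists a, Vm q s a0 = q (s, a).
Proof. exact: (bigmax_ex (fun a => q (s, a))). Qed.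

Variable (f : (S * A -> R) -> R) (alpha : R).
Hypothesis Ha : 0 < alpha.
Hypothesis Ht : forall sa, alpha <= tmean P sa.

Lemma tmean_gt0 sa : 0 < tmean P sa.
Proof. exact: lt_le_trans Ha (Ht sa). Qed.

Lemma zero_bellman q : hfield P alpha f q = (fun _ => 0) -> forall s a,
  q (s, a) = rmean P (s, a) + \sum_(s' : S) ptrans P s a s' * Vm q s' a
             - tmean P (s, a) * f q.
Proof.
move=> H s a; have := congr1 (fun g => g (s, a)) H; rewrite /hfield /Top /=.
set t := tmean P (s, a); set X := \sum_(s' : S) _ ; set r := rmean P (s, a).
have t0 : t != 0 by rewrite gt_eqF // tmean_gt0.
have a0 : alpha != 0 by rewrite gt_eqF.
move=> E.
have E' : alpha / t * (r + X - q (s, a) - t * f q) = 0.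
  rewrite -[RHS]E; field; exact: t0.
move/eqP: E'; rewrite mulf_eq0 mulf_eq0 invr_eq0 (negbTE a0) (negbTE t0) /=.
move/eqP => E''; rewrite -[LHS]addr0 -E'' /X /Vm /=; ring.
Qed.

End MDP.
Section Reach.
Context {R : realType} {S A : finType} (P : smdp_kernel R S A).
Hypothesis HP : is_smdp_law P.
Variable C : {set S}.
Hypothesis Ccomm : forall s s', s \in C -> s' \in C ->
  exists d, is_policy d /\ reach P d s s'.
Hypothesis Ctrans : forall s, s \notin C -> forall d, is_policy d -> transient P d s.

Definition e_det (d : S -> A) : rel S := fun x y => 0 < ptrans P x (d x) y.
Definition e_low : rel S := fun x y => [exists a, 0 < ptrans P x a y].

Definition det_pol (d : S -> A) : S -> A -> R := fun s a => (a == d s)%:R.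

Lemma det_pol_policy d : is_policy (det_pol d).
Proof.
split => [s a|s]; first by rewrite /det_pol ler0n.
rewrite /det_pol (bigD1 (d s)) //= eqxx big1 ?addr0 // => a /negbTE -> //.
Qed.

Lemma det_pol_rel d : policy_rel P (det_pol d) =2 e_det d.
Proof.
move=> x y; rewrite /policy_rel /e_det /det_pol (bigD1 (d x)) //= eqxx mul1r.
by rewrite big1 ?addr0 // => a /negbTE ->; rewrite mul0r.
Qed.

Lemma reach_det d s : exists2 s2, s2 \in C & connect (e_det d) s s2.
Proof.
case: (pselect (exists2 s2, s2 \in C & connect (e_det d) s s2)) => // H; exfalso.
have HnC : forall y, connect (e_det d) s y -> y \notin C.
  by move=> y sy; apply/negP => yC; apply: H; exists y.
pose mu y := #|[pred z | connect (e_det d) y z]|.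
suff: forall n y, (mu y <= n)%N -> connect (e_det d) s y -> False.
  by move/(_ (mu s) s (leqnn _) (connect0 _ _)).
elim => [|n IH] y Hmu sy.
  have : (0 < mu y)%N by apply/card_gt0P; exists y; rewrite inE; exact: connect0.
  by move: Hmu; rewrite leqn0 => /eqP ->.
have [y' [yy' ny'y]] := Ctrans (HnC y sy) (det_pol_policy d).
rewrite /reach (eq_connect (det_pol_rel d)) in yy'.
rewrite /reach (eq_connect (det_pol_rel d)) in ny'y.
apply: (IH y'); last exact: connect_trans sy yy'.
have : (mu y' < mu y)%N.
  apply: proper_card; apply/properP; split.
    by apply/fintype.subsetP => z; rewrite !inE => /(connect_trans yy').
  by exists y; rewrite inE //; exact: connect0.
by move=> lt; rewrite -ltnS (leq_trans lt Hmu).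
Qed.

Lemma policy_low d x y : is_policy d -> policy_rel P d x y -> e_low x y.
Proof.
move=> [d0 _]; rewrite /policy_rel => H; apply/existsP.
case: (pselect (exists a, 0 < ptrans P x a y)) => // N; exfalso.
move: H; rewrite big1 ?ltxx // => a _.
have : ptrans P x a y = 0.
  apply/eqP; rewrite eq_le ptrans_ge0 // andbT leNgt; apply/negP => h.
  by apply: N; exists a.
by move=> ->; rewrite mulr0.
Qed.

Lemma det_low d x y : e_det d x y -> e_low x y.
Proof. by move=> h; apply/existsP; exists (d x). Qed.

Lemma conn_low (a0 : A) s s2 : s2 \in C -> connect e_low s s2.
Proof.
move=> s2C; have [c0 c0C sc0] := reach_det (fun _ => a0) s.
have [d [pd rd]] := Ccomm c0C s2C.
apply: connect_trans (_ : connect e_low s c0) _.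
  by apply: connect_sub sc0 => u v /det_low /connect1.
by apply: connect_sub rd => u v /(policy_low pd) /connect1.
Qed.

End Reach.

Section PathBound.
Context {R : realType} {S : finType}.

Lemma iter_mono (F : R -> R) b : (forall x, b <= x -> x <= F x) ->
  forall n, b <= iter n F b /\ forall m, (m <= n)%N -> iter m F b <= iter n F b.
Proof.
move=> HF; elim => [|n [IH1 IH2]]; first by split => // m; rewrite leqn0 => /eqP ->.
have h1 : iter n F b <= iter n.+1 F b by rewrite /= HF.
split; first exact: le_trans IH1 h1.
move=> m; rewrite leq_eqVlt => /orP [/eqP -> //| lt].
exact: le_trans (IH2 m lt) h1.
Qed.

Lemma path_bound (e : rel S) (g : S -> R) (F : R -> R) :
  (forall x, 0 <= x -> x <= F x) ->
  (forall b1 b2, b1 <= b2 -> F b1 <= F b2) ->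
  (forall s s' b, 0 <= b -> e s s' -> g s <= b -> g s' <= F b) ->
  forall x y, connect e x y -> g x <= 0 -> g y <= iter #|S| F 0.
Proof.
move=> HF Hmono Hstep x y /connectP [p ep ->] gx.
case: (shortenP ep) => p' ep' up' _.
have Hsz : (size p' < #|S|)%N.
  have := card_uniqP up'; rewrite /= => <-; exact: max_card.
have [_ Hit] := iter_mono HF #|S|.
apply: le_trans (Hit _ (ltnW Hsz)).
have : forall (q : seq S) (z : S) (b : R), 0 <= b -> path e z q -> g z <= b ->
    g (last z q) <= iter (size q) F b /\ 0 <= iter (size q) F b.
  elim => [|w q IH] z b b0 /=; first by move=> _ ->.
  move=> /andP [ezw pq] gz.
  have gw : g w <= F b := Hstep _ _ _ b0 ezw gz.
  have Fb0 : 0 <= F b by exact: le_trans b0 (HF _ b0).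
  have [h1 h2] := IH w (F b) Fb0 pq gw.
  by rewrite -iterS iterSr; split.
by move/(_ p' x 0 (lexx 0) ep' gx) => [].
Qed.

End PathBound.
Section Bounded.
Context {R : realType} {S A : finType} (P : smdp_kernel R S A)
  (f : (S * A -> R) -> R) (alpha : R).
Hypothesis HP : is_smdp_law P.
Hypothesis HW : weakly_communicating P.
Hypothesis HF : cond_F f.
Hypothesis Ha : 0 < alpha.
Hypothesis Ht : forall sa, alpha <= tmean P sa.

Definition Kc := \sum_(sa : S * A) `|rmean P sa| / tmean P sa.
Definition Bc := \sum_(sa : S * A) `|rmean P sa| + \sum_(sa : S * A) tmean P sa * Kc.
Definition Pinv := 1 + \sum_(x : S * A * S)
  (if 0 < ptrans P x.1.1 x.1.2 x.2 then (ptrans P x.1.1 x.1.2 x.2)^-1 else 0).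

Lemma Kc_ge0 : 0 <= Kc.
Proof.
apply: sumr_ge0 => sa _; apply: divr_ge0 => //; exact/ltW/(tmean_gt0 Ha Ht).
Qed.

Lemma Kc_term sa : `|rmean P sa| / tmean P sa <= Kc.
Proof.
rewrite /Kc; apply: (@sum_ge_term _ _ (fun sa => `|rmean P sa| / tmean P sa) sa) => k.
apply: divr_ge0 => //; exact/ltW/(tmean_gt0 Ha Ht).
Qed.

Lemma Bc_ge0 : 0 <= Bc.
Proof.
apply: addr_ge0; apply: sumr_ge0 => sa _ //.
apply: mulr_ge0; [exact/ltW/(tmean_gt0 Ha Ht)|exact: Kc_ge0].
Qed.

Lemma Pinv_ge1 : 1 <= Pinv.
Proof.
rewrite lerDl; apply: sumr_ge0 => x _; case: ifP => // h.
by rewrite invr_ge0 ltW.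
Qed.

Lemma Pinv_p s a s' : 0 < ptrans P s a s' -> 1 <= Pinv * ptrans P s a s'.
Proof.
move=> hp.
have : (ptrans P s a s')^-1 <= Pinv.
  have := @sum_ge_term _ _ (fun x : S * A * S =>
    if 0 < ptrans P x.1.1 x.1.2 x.2 then (ptrans P x.1.1 x.1.2 x.2)^-1 else 0) (s, a, s').
  rewrite /= hp => /(_ _) hs.
  rewrite /Pinv; apply: le_trans (hs _) _; last by rewrite lerDr.
  by move=> k; case: ifP => // h; rewrite invr_ge0 ltW.
move=> h; apply: le_trans (_ : (ptrans P s a s')^-1 * ptrans P s a s' <= _).
  by rewrite mulVf // gt_eqF.
by rewrite ler_wpM2r // ptrans_ge0.
Qed.

Lemma sum_p_shift s a (V : S -> R) c0 :
  \sum_(s' : S) ptrans P s a s' * (V s' - c0) =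
  \sum_(s' : S) ptrans P s a s' * V s' - c0.
Proof.
under eq_bigr do rewrite mulrBr.
by rewrite sumrB -mulr_suml ptrans_sum1 // mul1r.
Qed.

Lemma sum_p_bounds s a (V : S -> R) lo hi :
  (forall s', lo <= V s' <= hi) ->
  lo <= \sum_(s' : S) ptrans P s a s' * V s' <= hi.
Proof.
move=> H; have e1 := sum_p_shift s a V lo; have e2 := sum_p_shift s a V hi.
have g1 : 0 <= \sum_(s' : S) ptrans P s a s' * (V s' - lo).
  apply: sumr_ge0 => s' _; apply: mulr_ge0; first exact: ptrans_ge0.
  by have /andP[h1 _] := H s'; rewrite subr_ge0.
have g2 : \sum_(s' : S) ptrans P s a s' * (V s' - hi) <= 0.
  apply: sumr_le0 => s' _; apply: mulr_ge0_le0; first exact: ptrans_ge0.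
  by have /andP[_ h2] := H s'; rewrite subr_le0.
apply/andP; split; lra.
Qed.

Lemma sum_p_term s a (V : S -> R) c0 s' :
  (forall s'', c0 <= V s'') ->
  ptrans P s a s' * (V s' - c0) <= \sum_(s'' : S) ptrans P s a s'' * V s'' - c0.
Proof.
move=> H; rewrite -sum_p_shift.
apply: (@sum_ge_term _ _ (fun s'' => ptrans P s a s'' * (V s'' - c0)) s') => k.
by apply: mulr_ge0; [exact: ptrans_ge0| rewrite subr_ge0].
Qed.

Lemma gain_bound q (i : S * A) : hfield P alpha f q = (fun _ => 0) ->
  `|f q| <= Kc.
Proof.
move=> Hq; case: i => s a.
pose V s := Vm q s a.
have Hb : forall s a', q (s, a') = rmean P (s, a') +
    \sum_(s' : S) ptrans P s a' s' * V s' - tmean P (s, a') * f q.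
  move=> s0 a'; rewrite (zero_bellman Ha Ht Hq); congr (_ + _ - _).
  by apply: eq_bigr => s' _; rewrite /V (Vm_indep q s' a' a).
have [s0 Hs0] := ex_argmin V s; have [s1 Hs1] := ex_argmax V s.
have [a1 Ha1] := Vm_ex q s1 a.
have tp : forall sa, 0 < tmean P sa := tmean_gt0 Ha Ht.
rewrite ler_norml; apply/andP; split.
-
  have h1 : q (s0, a) <= V s0 := Vm_ub q s0 a a.
  have /andP[h2 _] := sum_p_bounds s0 a (fun s' => introT andP (conj (Hs0 s') (Hs1 s'))) .
  have h3 := Kc_term (s0, a).
  have h4 : rmean P (s0, a) <= tmean P (s0, a) * f q.
    by move: h1; rewrite Hb; move: h2 => /[swap]; lra.
  have h5 : - Kc <= - `|rmean P (s0, a)| / tmean P (s0, a) by rewrite mulNr lerN2.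
  apply: le_trans h5 _; rewrite ler_pdivrMr ?tp //.
  have := ler_norm (- rmean P (s0, a)); rewrite normrN.
  move: h4; rewrite mulrC; lra.
- have h1 : q (s1, a1) = V s1 by rewrite -Ha1.
  have /andP[_ h2] := sum_p_bounds s1 a1 (fun s' => introT andP (conj (Hs0 s') (Hs1 s'))).
  have h3 := Kc_term (s1, a1).
  have h4 : tmean P (s1, a1) * f q <= rmean P (s1, a1).
    by move: h1; rewrite Hb; move: h2; lra.
  apply: le_trans h3; rewrite ler_pdivlMr ?tp //.
  have := ler_norm (rmean P (s1, a1)); move: h4; rewrite mulrC; lra.
Qed.

End Bounded.
Section Bounded2.
Context {R : realType} {S A : finType} (P : smdp_kernel R S A)
  (f : (S * A -> R) -> R) (alpha : R).
Hypothesis HP : is_smdp_law P.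
Hypothesis HW : weakly_communicating P.
Hypothesis HF : cond_F f.
Hypothesis Ha : 0 < alpha.
Hypothesis Ht : forall sa, alpha <= tmean P sa.

Lemma sum_p_term2 s a (V : S -> R) c0 s' :
  (forall s'', V s'' <= c0) ->
  ptrans P s a s' * (c0 - V s') <= c0 - \sum_(s'' : S) ptrans P s a s'' * V s''.
Proof.
move=> H; have e := sum_p_shift HP s a (fun s'' => - V s'') (- c0).
have : ptrans P s a s' * (c0 - V s') <=
    \sum_(s'' : S) ptrans P s a s'' * (- V s'' - - c0).
  have -> : c0 - V s' = - V s' - - c0 by rewrite opprK addrC.
  apply: (@sum_ge_term _ _ (fun s'' => ptrans P s a s'' * (- V s'' - - c0)) s') => k.
  by apply: mulr_ge0; [exact: ptrans_ge0| rewrite opprK addrC subr_ge0].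
rewrite e; under eq_bigr do rewrite mulrN; rewrite sumrN; lra.
Qed.

Lemma step_div (g p b Bc0 Pi : R) : 0 <= g -> 0 < p -> 1 <= Pi * p ->
  p * g <= b + Bc0 -> 0 <= Pi -> g <= (b + Bc0) * Pi.
Proof.
move=> g0 p0 h1 h2 Pi0.
have h3 : g <= g * (Pi * p) by rewrite ler_peMr.
apply: le_trans h3 _.
have -> : g * (Pi * p) = (p * g) * Pi by ring.
exact: ler_wpM2r.
Qed.

Lemma zero_bounded : exists Bd, forall q, hfield P alpha f q = (fun _ => 0) ->
  forall i, `|q i| <= Bd.
Proof.
have [C [[_ [Ccomm _]] [_ Ctrans]]] := HW.
have [[L HL] [Hsis _]] := HF.
pose Fb (b : R) := (b + Bc P) * Pinv P.
pose beta := iter #|S| Fb 0.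
pose Bw := Bc P + 2 * beta.
pose N := Kc P + `|L| * Bw + 1.
have NE : N = Kc P + `|L| * Bw + 1 by [].
have [Hmono0 Honto0] := Hsis (fun _ => 0).
have [chi Hchi] := Honto0 N.
have [clo Hclo] := Honto0 (- N).
exists (`|chi| + `|clo| + Bw).
move=> q Hq [s a].
have Bc0 : 0 <= Bc P := Bc_ge0 Ha Ht.
have P1 : 1 <= Pinv P := Pinv_ge1 P.
have Kc0 : 0 <= Kc P := Kc_ge0 Ha Ht.
have HF1 : forall x, 0 <= x -> x <= Fb x.
  by move=> x x0; rewrite /Fb; nra.
have HF2 : forall b1 b2, b1 <= b2 -> Fb b1 <= Fb b2.
  by move=> b1 b2 h; rewrite /Fb; apply: ler_wpM2r; [lra|lra].
have beta0 : 0 <= beta.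
  by have [h _] := iter_mono (b := 0) HF1 #|S|.
pose V s := Vm q s a.
have Hb : forall s a', q (s, a') = rmean P (s, a') +
    \sum_(s' : S) ptrans P s a' s' * V s' - tmean P (s, a') * f q.
  move=> s0 a'; rewrite (zero_bellman Ha Ht Hq); congr (_ + _ - _).
  by apply: eq_bigr => s' _; rewrite /V (Vm_indep q s' a' a).
have [s0 Hs0] := ex_argmin V s; have [s1 Hs1] := ex_argmax V s.
have Hgain := gain_bound HP Ha Ht (s, a) Hq.
have Hrt : forall sa, `|rmean P sa - tmean P sa * f q| <= Bc P.
  move=> sa; apply: le_trans (ler_normB _ _) _.
  have tp := tmean_gt0 Ha Ht sa.
  rewrite normrM (gtr0_norm tp) /Bc; apply: lerD.
    by apply: (@sum_ge_term _ _ (fun sa => `|rmean P sa|) sa).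
  apply: le_trans (_ : tmean P sa * Kc P <= _).
    by apply: ler_wpM2l => //; exact: ltW.
  apply: (@sum_ge_term _ _ (fun sa => tmean P sa * Kc P) sa) => k.
  by apply: mulr_ge0 => //; exact/ltW/(tmean_gt0 Ha Ht).
have [d Hd] := choice (fun s => Vm_ex q s a).
have [s2 s2C c12] := reach_det Ctrans d s1.
have up : V s1 - V s2 <= beta.
  apply: (path_bound (g := fun s => V s1 - V s) HF1 HF2 _ c12); last by rewrite subrr.
  move=> u u' b b0 e gs.
  have E := Hb u (d u); rewrite -[q (u, d u)]Hd -/(V u) in E.
  have T := sum_p_term2 u (d u) (V := V) u' Hs1.
  have hr := Hrt (u, d u); rewrite ler_norml in hr.
  apply: step_div; [by rewrite subr_ge0| exact: e| exact: Pinv_p e| |lra].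
  move: T E; set X := \sum_(s'' : S) _ => T E.
  move/andP: hr => [hr1 hr2]; lra.
have low : V s2 - V s0 <= beta.
  apply: (path_bound (g := fun s => V s - V s0) HF1 HF2 _ (conn_low Ccomm Ctrans a s0 s2C)); last by rewrite subrr.
  move=> u u' b b0 /existsP [a' e] gs.
  have E := Hb u a'.
  have hq : q (u, a') <= V u := Vm_ub q u a a'.
  have T := sum_p_term HP u a' (V := V) u' Hs0.
  have hr := Hrt (u, a'); rewrite ler_norml in hr.
  apply: step_div; [by rewrite subr_ge0| exact: e| exact: Pinv_p e| |lra].
  move: T E; set X := \sum_(s'' : S) _ => T E.
  move/andP: hr => [hr1 hr2]; lra.
have Hw : forall i, `|q i - V s0| <= Bw.
  case=> u a'; have E := Hb u a'.
  have /andP[b1 b2] := sum_p_bounds HP u a' (fun s' => introT andP (conj (Hs0 s') (Hs1 s'))).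
  have hr := Hrt (u, a'); rewrite ler_norml in hr; move/andP: hr => [hr1 hr2].
  rewrite ler_norml /Bw; move: b1 b2 E; set X := \sum_(s'' : S) _ => b1 b2 E.
  apply/andP; split; lra.
pose mv : S * A -> R := vadd (fun _ => 0) (vscale (V s0) ones).
have Bw0 : 0 <= Bw by rewrite /Bw; lra.
have hs : supnorm (vsub q mv) <= Bw.
  apply: supnorm_le => // i; rewrite /vsub /mv /vadd /vscale /ones add0r mulr1.
  exact: Hw.
have hfl : `|f q - f mv| <= `|L| * Bw.
  apply: le_trans (HL q mv) _.
  apply: le_trans (_ : `|L| * supnorm (vsub q mv) <= _).
    by apply: ler_wpM2r; [exact: supnorm_ge0| exact: ler_norm].
  by apply: ler_wpM2l.
rewrite ler_norml in hfl; rewrite ler_norml in Hgain.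
move/andP: hfl => [hf1 hf2]; move/andP: Hgain => [hg1 hg2].
have L0 : 0 <= `|L| * Bw by apply: mulr_ge0.
have mlt : V s0 < chi.
  rewrite ltNge; apply/negP; rewrite le_eqVlt => /orP [/eqP e|lt].
    by move: Hchi; rewrite e -/mv => Hc; move: hf1 hf2; rewrite Hc; lra.
  have := Hmono0 _ _ lt; rewrite -/mv Hchi; lra.
have mgt : clo < V s0.
  rewrite ltNge; apply/negP; rewrite le_eqVlt => /orP [/eqP e|lt].
    by move: Hclo; rewrite -e -/mv => Hc; move: hf1 hf2; rewrite Hc; lra.
  have := Hmono0 _ _ lt; rewrite -/mv Hclo; lra.
have := Hw (s, a); rewrite ler_norml => /andP [w1 w2].
have := ler_norm chi; have := ler_norm (- clo); rewrite normrN => n1 n2.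
have := normr_ge0 chi; have := normr_ge0 clo => c0 c1.
rewrite ler_norml; apply/andP; split; lra.
Qed.

End Bounded2.
Section Compact.
Context {R : realType} {I : finType}.

Definition toF (v : 'rV[R]_#|I|) : I -> R := fun i => v ord0 (enum_rank i).

Lemma rV_coord_le (v : 'rV[R]_#|I|) j : `|v ord0 j| <= `|v|.
Proof.
have -> : `|v| = mx_norm v by [].
rewrite mx_normrE.
by apply/bigmax_geP; right => /=; exists (ord0, j).
Qed.

Lemma supnorm_toF (v w : 'rV[R]_#|I|) : supnorm (vsub (toF v) (toF w)) <= `|v - w|.
Proof.
apply: supnorm_le => // i; rewrite /vsub /toF.
by have := rV_coord_le (v - w) (enum_rank i); rewrite !mxE.
Qed.

Lemma unif_pos (f : (I -> R) -> R) L :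
  (forall x y, `|f x - f y| <= L * supnorm (vsub x y)) ->
  (forall x, SISTr f x) ->
  forall eta Rb, 0 < eta -> 0 <= Rb ->
  exists2 rho, 0 < rho & forall z, (forall i, `|z i| <= Rb) ->
    rho <= f (vadd z (vscale eta ones)) - f z.
Proof.
move=> HL Hsis eta Rb eta0 Rb0.
pose phi (v : 'rV[R]_#|I|) := f (vadd (toF v) (vscale eta ones)) - f (toF v).
pose Bx := [set v : 'rV[R]_#|I| | forall j, `[- Rb, Rb]%classic (v ord0 j)].
have cB : compact Bx.
  apply: (@rV_compact _ _ (fun _ => `[- Rb, Rb]%classic)) => _.
  exact: segment_compact.
have nB : Bx !=set0.
  exists 0 => j /=; rewrite mxE in_itv /= oppr_le0 Rb0 //.
have Lip : forall v w, `|phi v - phi w| <= (`|L| + `|L|) * `|v - w|.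
  move=> v w; rewrite /phi.
  have h1 := HL (vadd (toF v) (vscale eta ones)) (vadd (toF w) (vscale eta ones)).
  have h2 := HL (toF v) (toF w).
  have e : vsub (vadd (toF v) (vscale eta ones)) (vadd (toF w) (vscale eta ones))
           = vsub (toF v) (toF w).
    by apply: funext => i; rewrite /vsub /vadd; ring.
  rewrite e in h1.
  have hs := supnorm_toF v w.
  have hs0 := supnorm_ge0 (vsub (toF v) (toF w)).
  have hL : L * supnorm (vsub (toF v) (toF w)) <= `|L| * `|v - w|.
    apply: le_trans (_ : `|L| * supnorm (vsub (toF v) (toF w)) <= _).
      by apply: ler_wpM2r => //; exact: ler_norm.
    exact: ler_wpM2l.
  set a1 := f (vadd (toF v) _); set a2 := f (vadd (toF w) _).
  have -> : a1 - f (toF v) - (a2 - f (toF w)) = (a1 - a2) - (f (toF v) - f (toF w)) by ring.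
  apply: le_trans (ler_normB _ _) _.
  rewrite mulrDl; apply: lerD; exact: le_trans hL.
have cphi : continuous phi.
  move=> v; apply/(@cvgrPdist_lt _ _ _ (nbhs v) (nbhs_filter v)) => e e0.
  have k0 : 0 < `|L| + `|L| + 1 by rewrite ltr_wpDl // addr_ge0.
  pose K := `|L| + `|L| + 1.
  near=> w.
  apply: le_lt_trans (Lip v w) _.
  apply: le_lt_trans (_ : (`|L| + `|L|) * `|v - w| <= K * `|v - w|) _.
    by apply: ler_wpM2r => //; rewrite /K lerDl.
  have ee : K * (e / K) = e by rewrite mulrC mulfVK // gt_eqF.
  rewrite -[X in _ < X]ee ltr_pM2l //.
  near: w.
  apply: (@cvgr_dist_lt _ _ _ (nbhs v) (nbhs_filter v) id v cvg_id).
  exact: divr_gt0.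
have [c cB' cmin] := EVT_min_rV nB cB (continuous_subspaceT cphi).
exists (phi c).
  have [Hm _] := Hsis (toF c); have := Hm 0 eta eta0.
  have -> : vadd (toF c) (vscale 0 ones) = toF c.
    by apply: funext => i; rewrite /vadd /vscale mul0r addr0.
  by rewrite /phi subr_gt0.
move=> z Hz.
pose v : 'rV[R]_#|I| := \row_j z (enum_val j).
have vz : toF v = z by apply: funext => i; rewrite /toF /v mxE enum_rankK.
have vB : v \in Bx.
  rewrite inE /= => j; rewrite /v mxE /= in_itv /=; have := Hz (enum_val j).
  by rewrite ler_norml.
by have := cmin v vB; rewrite /phi vz.
Unshelve. all: by end_near.
Qed.

End Compact.
Section Deriv.
Context {R : realType}.

Lemma deriv_left (g : R -> R) (t1 d gam : R) : 0 < t1 -> is_derive t1 (1 : R) g d ->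
  (forall t, 0 <= t -> t < t1 -> gam * (t1 - t) < g t1 - g t) -> gam <= d.
Proof.
move=> t10 [dg dv] H.
pose Q := fun h : R => h^-1 *: ((g \o shift t1) (h *: 1) - g t1).
have cv : Q @ 0^' --> d by rewrite -dv; exact: dg.
rewrite leNgt; apply/negP => dlt.
have cl := cvg_dnbhs_at_left cv.
have n1 := cvgr_lt d cl gam dlt.
have n2 := nbhs_left_lt (0 : R).
have n3 : \forall h \near (0 : R)^'-, - t1 < h.
  by apply: nbhs_left_gt; rewrite oppr_lt0.
have [h [Qh [hn ht]]] : exists h, Q h < gam /\ h < 0 /\ - t1 < h.
  apply: (@filter_ex _ (0 : R)^'- _).
  near=> h; split; [|split]; near: h; [exact: n1|exact: n2|exact: n3].
have := H (t1 + h); rewrite (_ : t1 - (t1 + h) = - h); last by ring.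
move/(_ _ _) => /=.
have h1 : 0 <= t1 + h by lra.
have h2 : t1 + h < t1 by lra.
move/(_ h1 h2) => Hh.
move: Qh; rewrite /Q /shift /= scaler1 [h + t1]addrC.
have hi : h^-1 < 0 by rewrite invr_lt0.
have : h^-1 * (gam * h) < h^-1 * (g (t1 + h) - g t1).
  by rewrite ltr_nM2l //; lra.
have -> : h^-1 * (gam * h) = gam by rewrite mulrCA mulVf ?mulr1 // lt_eqF.
move=> a b; have : gam < gam by apply: lt_trans a b.
by rewrite ltxx.
Unshelve. all: by end_near.
Qed.

End Deriv.
Lemma near_right_ex {R : realType} (Q : R -> Prop) (t1 : R) :
  (\forall t \near t1^'+, Q t) -> exists2 k, 0 < k & forall t, t1 < t -> t < t1 + k -> Q t.
Proof.
rewrite near_withinE => /nbhs_ballP [e /= e0 He]; exists e => // t h1 h2.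
apply: He => //; rewrite /ball /= ltr_norml; apply/andP; split; lra.
Qed.

Section ODE.
Context {R : realType} {S A : finType} (P : smdp_kernel R S A)
  (f : (S * A -> R) -> R) (alpha : R).
Hypothesis HP : is_smdp_law P.
Hypothesis Ha : 0 < alpha.
Hypothesis Ht : forall sa, alpha <= tmean P sa.

Lemma hdiff_eq (y q : S * A -> R) s a :
  hfield P alpha f y (s, a) - hfield P alpha f q (s, a) =
  alpha / tmean P (s, a) * (\sum_(s' : S) ptrans P s a s' * (Vm y s' a - Vm q s' a)
     - (y (s, a) - q (s, a))) - alpha * (f y - f q).
Proof.
rewrite /hfield /Top /=.
under [X in _ = alpha / _ * (X - _) - _]eq_bigr do rewrite mulrBr.
rewrite sumrB /Vm; ring.
Qed.

Lemma sum_p_le s a (W : S -> R) hi : (forall s', W s' <= hi) ->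
  \sum_(s' : S) ptrans P s a s' * W s' <= hi.
Proof.
move=> H; apply: le_trans (_ : \sum_(s' : S) ptrans P s a s' * hi <= _).
  by apply: ler_sum => s' _; apply: ler_wpM2l; [exact: ptrans_ge0|exact: H].
by rewrite -mulr_suml ptrans_sum1 // mul1r.
Qed.

Lemma sum_p_ge s a (W : S -> R) lo : (forall s', lo <= W s') ->
  lo <= \sum_(s' : S) ptrans P s a s' * W s'.
Proof.
move=> H; apply: le_trans (_ : \sum_(s' : S) ptrans P s a s' * lo <= _).
  by rewrite -mulr_suml ptrans_sum1 // mul1r.
by apply: ler_sum => s' _; apply: ler_wpM2l; [exact: ptrans_ge0|exact: H].
Qed.

Lemma hdiff_le (y q : S * A -> R) i : (forall k, y k - q k <= y i - q i) ->
  hfield P alpha f y i - hfield P alpha f q i <= - alpha * (f y - f q).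
Proof.
case: i => s a H; rewrite hdiff_eq.
have h : \sum_(s' : S) ptrans P s a s' * (Vm y s' a - Vm q s' a) <= y (s, a) - q (s, a).
  apply: sum_p_le => s'.
  have [a1 e1] := Vm_ex y s' a; rewrite e1.
  have := Vm_ub q s' a a1; have := H (s', a1); lra.
have tp := tmean_gt0 Ha Ht (s, a).
have c0 : 0 <= alpha / tmean P (s, a) by apply: divr_ge0; exact: ltW.
have hh : alpha / tmean P (s, a) * (\sum_(s' : S) ptrans P s a s' * (Vm y s' a - Vm q s' a)
     - (y (s, a) - q (s, a))) <= 0.
  by apply: mulr_ge0_le0 => //; rewrite subr_le0.
lra.
Qed.

Lemma hdiff_ge (y q : S * A -> R) j : (forall k, y j - q j <= y k - q k) ->
  - alpha * (f y - f q) <= hfield P alpha f y j - hfield P alpha f q j.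
Proof.
case: j => s a H; rewrite hdiff_eq.
have h : y (s, a) - q (s, a) <= \sum_(s' : S) ptrans P s a s' * (Vm y s' a - Vm q s' a).
  apply: sum_p_ge => s'.
  have [b1 e1] := Vm_ex q s' a; rewrite e1.
  have := Vm_ub y s' a b1; have := H (s', b1); lra.
have tp := tmean_gt0 Ha Ht (s, a).
have c0 : 0 <= alpha / tmean P (s, a) by apply: divr_ge0; exact: ltW.
have hh : 0 <= alpha / tmean P (s, a) * (\sum_(s' : S) ptrans P s a s' * (Vm y s' a - Vm q s' a)
     - (y (s, a) - q (s, a))).
  by apply: mulr_ge0 => //; rewrite subr_ge0.
lra.
Qed.

End ODE.
Local Notation zf x qs t i := (x t i - qs i).

Section ODE2.
Context {R : realType} {S A : finType} (P : smdp_kernel R S A)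
  (f : (S * A -> R) -> R) (alpha : R).
Hypothesis HP : is_smdp_law P.
Hypothesis Ha : 0 < alpha.
Hypothesis Ht : forall sa, alpha <= tmean P sa.

Lemma ode_main (L : R) :
  (forall x y, `|f x - f y| <= L * supnorm (vsub x y)) ->
  (forall x, SISTr f x) ->
  forall (qs : S * A -> R), hfield P alpha f qs = (fun _ => 0) ->
  forall eta rho delta : R, 0 < eta -> 0 < rho -> 0 < delta ->
  rho <= f (vadd qs (vscale eta ones)) - f qs ->
  rho <= f qs - f (vadd qs (vscale (- eta) ones)) ->
  `|L| * (3 * delta) < rho ->
  forall x : R -> S * A -> R, ode_solution (hfield P alpha f) x ->
  (forall i, `|x 0 i - qs i| < delta) ->
  forall T, 0 <= T -> forall i, `|x T i - qs i| < eta + 3 * delta.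
Proof.
move=> HL Hsis qs Hq eta rho delta eta0 rho0 delta0 Hup Hdn HLd x sol H0 T T0.
have [Hmq _] := Hsis qs.
have hq0 : forall i, hfield P alpha f qs i = 0 by move=> i; rewrite Hq.
pose gam := delta / (2 * (1 + T)).
have gam0 : 0 < gam by apply: divr_gt0 => //; lra.
have gamT : gam * (1 + T) = delta / 2.
  by rewrite /gam; field; apply/eqP; lra.
have gamt : forall t, t <= T -> gam * (1 + t) <= delta / 2.
  by move=> t tT; rewrite -gamT; apply: ler_wpM2l; [exact: ltW|lra].
have gamt0 : forall t, 0 <= t -> 0 <= gam * (1 + t).
  by move=> t t0; apply: mulr_ge0; [exact: ltW|lra].
pose G t := forall i j, zf x qs t i - zf x qs t j < 2 * delta + gam * (1 + t) /\
   zf x qs t i < (eta + 2 * delta) + gam * (1 + t) /\ - (eta + 2 * delta) - gam * (1 + t) < zf x qs t i.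
have G0 : G 0.
  move=> i j; have := H0 i; have := H0 j; rewrite !ltr_norml.
  move=> /andP[a1 a2] /andP[b1 b2]; have := gamt0 0 (lexx 0).
  split; [lra|split; lra].
pose E := [set s | 0 <= s <= T /\ forall t, 0 <= t <= s -> G t].
have E0 : E 0.
  split; first by rewrite lexx T0.
  by move=> t /andP[h1 h2]; have -> : t = 0 by apply/eqP; rewrite eq_le h1 h2.
have Eub : ubound E T by move=> s [/andP[_ h] _].
have hs : has_sup E by split; [exists 0|exists T].
pose t1 := sup E.
have t1ge : 0 <= t1 := sup_upper_bound hs E0.
have t1le : t1 <= T := ge_sup (ex_intro _ 0 E0) Eub.
have Gbefore : forall t, 0 <= t -> t < t1 -> G t.
  move=> t t0 tlt.
  have e0 : 0 < t1 - t by rewrite subr_gt0.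
  have [s [/andP[_ _] Gs] ss] := sup_adherent e0 hs.
  apply: Gs; rewrite t0 /=; rewrite -/t1 in ss; lra.
have Dx : forall t : R, 0 < t -> forall i,
    is_derive t (1 : R) (fun u => x u i) (hfield P alpha f (x t) i).
  by move=> t t0 i; exact: ((sol i).1 t t0).
have RC : forall t : R, 0 <= t -> forall i, (fun u => x u i) @ t^'+ --> x t i.
  move=> t; rewrite le_eqVlt => /orP [/eqP <-|tp] i; first exact: (sol i).2.
  apply: cvg_at_right_filter.
  have [dx _] := Dx t tp i.
  exact: (differentiable_continuous ((derivable1_diffP _ _).1 dx)).
have Gt1 : G t1.
  case: (pselect (G t1)) => // nG; exfalso.
  have t1pos : 0 < t1.
    rewrite lt_neqAle t1ge andbT; apply/eqP => e; apply: nG; rewrite -e; exact: G0.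
  move: nG => /existsNP [i0 /existsNP [j0 nij]].
  have [im Him] := ex_argmax (fun k => zf x qs t1 k) i0; have [jm Hjm] := ex_argmin (fun k => zf x qs t1 k) i0.
  pose Del := f (x t1) - f qs.
  have hI : hfield P alpha f (x t1) im <= - alpha * Del.
    have := hdiff_le f HP Ha Ht (y := x t1) (q := qs) (i := im) Him.
    by rewrite hq0 subr0.
  have hJ : - alpha * Del <= hfield P alpha f (x t1) jm.
    have := hdiff_ge f HP Ha Ht (y := x t1) (q := qs) (j := jm) Hjm.
    by rewrite hq0 subr0.
  have b1 := gamt t1 t1le.
  have bb := gamt0 t1 t1ge.
  case: (pselect (2 * delta + gam * (1 + t1) <= zf x qs t1 im - zf x qs t1 jm)) => [cA|cA].
    have D := is_deriveB (Dx t1 t1pos im) (Dx t1 t1pos jm).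
    have : gam <= hfield P alpha f (x t1) im - hfield P alpha f (x t1) jm.
      apply: deriv_left t1pos D _ => t t0 tlt.
      have [g1 _] := Gbefore t t0 tlt im jm.
      rewrite !fctE; lra.
    lra.
  have cA' : zf x qs t1 im - zf x qs t1 jm < 2 * delta + gam * (1 + t1) by rewrite ltNge; apply/negP.
  case: (pselect ((eta + 2 * delta) + gam * (1 + t1) <= zf x qs t1 im)) => [cB|cB].
    have lgt : eta < zf x qs t1 jm by lra.
        have hsn : supnorm (vsub (x t1) (vadd qs (vscale (zf x qs t1 jm) ones))) <= 2 * delta + gam * (1 + t1).
      apply: supnorm_le; first lra.
      move=> k; rewrite /vsub /vadd /vscale /ones mulr1.
      have := Him k; have := Hjm k; move=> k1 k2.
      rewrite ler_norml; apply/andP; split; lra.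
    have hL := HL (x t1) (vadd qs (vscale (zf x qs t1 jm) ones)).
    have hL' : L * supnorm (vsub (x t1) (vadd qs (vscale (zf x qs t1 jm) ones))) <= `|L| * (3 * delta).
      apply: le_trans (_ : `|L| * supnorm (vsub (x t1) (vadd qs (vscale (zf x qs t1 jm) ones))) <= _).
        by apply: ler_wpM2r; [exact: supnorm_ge0|exact: ler_norm].
      by apply: ler_wpM2l => //; lra.
    have hm := Hmq eta (zf x qs t1 jm) lgt.
    have e0 : vadd qs (vscale eta ones) = vadd qs (vscale eta ones) by [].
    have DelP : 0 < Del.
      rewrite /Del; move: hL; rewrite ler_norml => /andP [hL1 hL2].
      have : vadd qs (vscale 0 ones) = qs.
        by apply: funext => k; rewrite /vadd /vscale mul0r addr0.
      lra.
    have := deriv_left t1pos (Dx t1 t1pos im) (gam := gam) _.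
    have Hn : forall t, 0 <= t -> t < t1 -> gam * (t1 - t) < x t1 im - x t im.
      move=> t t0 tlt; have [_ [g1 _]] := Gbefore t t0 tlt im jm.
      lra.
    move/(_ Hn) => hg.
    have : 0 < alpha * Del by apply: mulr_gt0.
    lra.
  have cB' : zf x qs t1 im < (eta + 2 * delta) + gam * (1 + t1) by rewrite ltNge; apply/negP.
  have ci0 : zf x qs t1 i0 <= - (eta + 2 * delta) - gam * (1 + t1).
    rewrite leNgt; apply/negP => h; apply: nij.
    have := Him i0; have := Hjm j0; have := Him j0; have := Hjm i0 => k1 k2 k3 k4.
    split; [lra|split; lra].
  have ujm : zf x qs t1 jm <= - (eta + 2 * delta) - gam * (1 + t1) by have := Hjm i0; lra.
  have ult : zf x qs t1 im < - eta by lra.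
    have hsn : supnorm (vsub (x t1) (vadd qs (vscale (zf x qs t1 im) ones))) <= 2 * delta + gam * (1 + t1).
    apply: supnorm_le; first lra.
    move=> k; rewrite /vsub /vadd /vscale /ones mulr1.
    have := Him k; have := Hjm k; move=> k1 k2.
    rewrite ler_norml; apply/andP; split; lra.
  have hL := HL (x t1) (vadd qs (vscale (zf x qs t1 im) ones)).
  have hL' : L * supnorm (vsub (x t1) (vadd qs (vscale (zf x qs t1 im) ones))) <= `|L| * (3 * delta).
    apply: le_trans (_ : `|L| * supnorm (vsub (x t1) (vadd qs (vscale (zf x qs t1 im) ones))) <= _).
      by apply: ler_wpM2r; [exact: supnorm_ge0|exact: ler_norm].
    by apply: ler_wpM2l => //; lra.
  have hm := Hmq (zf x qs t1 im) (- eta) ult.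
  have DelN : Del < 0.
    rewrite /Del; move: hL; rewrite ler_norml => /andP [hL1 hL2].
    lra.
  have D := is_deriveN (Dx t1 t1pos jm).
  have Hn : forall t, 0 <= t -> t < t1 ->
      gam * (t1 - t) < (- (fun u => x u jm)) t1 - (- (fun u => x u jm)) t.
    move=> t t0 tlt; have [_ [_ g1]] := Gbefore t t0 tlt jm jm.
    rewrite !fctE; lra.
  have hg := deriv_left t1pos D Hn.
  have : alpha * Del < 0 by rewrite pmulr_rlt0.
  lra.
have Tt1 : t1 = T.
  apply/eqP; rewrite eq_le t1le /= leNgt; apply/negP => lt.
  have NR : \forall t \near t1^'+, forall p : (S * A) * (S * A),
     zf x qs t p.1 - zf x qs t p.2 < 2 * delta + gam * (1 + t1) /\
     zf x qs t p.1 < (eta + 2 * delta) + gam * (1 + t1) /\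
     - (eta + 2 * delta) - gam * (1 + t1) < zf x qs t p.1.
    apply: filter_forall => -[i j] /=.
    have [g1 [g2 g3]] := Gt1 i j.
    have ci := RC t1 t1ge i; have cj := RC t1 t1ge j.
    have czi : (fun u => x u i - qs i) @ t1^'+ --> x t1 i - qs i.
      exact: (cvgB ci (cvg_cst _)).
    have czj : (fun u => x u j - qs j) @ t1^'+ --> x t1 j - qs j.
      exact: (cvgB cj (cvg_cst _)).
    have czij : (fun u => (x u i - qs i) - (x u j - qs j)) @ t1^'+ -->
        (x t1 i - qs i) - (x t1 j - qs j).
      exact: (cvgB czi czj).
    near=> t; split; [|split]; near: t.
    - exact: (cvgr_lt _ czij _ g1).
    - exact: (cvgr_lt _ czi _ g2).
    - exact: (cvgr_gt _ czi _ g3).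
  have [k k0 Hk] := near_right_ex NR.
  pose s := Num.min (t1 + k / 2) T.
  have sgt : t1 < s by rewrite /s lt_min lt; rewrite andbT; lra.
  have sle : s <= t1 + k / 2 by rewrite /s ge_min lexx.
  have Es : E s.
    split.
      by apply/andP; split; [lra| rewrite /s ge_min lexx orbT].
    move=> t /andP [t0 ts].
    case: (ltgtP t t1) => [tlt|tgt|->]; first exact: Gbefore.
      move=> i j; have tk : t < t1 + k by lra.
      have := Hk t tgt tk (i, j).
      move=> /= [h1 [h2 h3]].
      have : gam * (1 + t1) <= gam * (1 + t).
        by apply: ler_wpM2l; [exact: ltW|lra].
      move=> hb; split; [lra|split; lra].
    exact: Gt1.
  have := sup_upper_bound hs Es; rewrite -/t1; lra.
have GT : G T by rewrite -Tt1.
move=> i; have [_ [g2 g3]] := GT i i.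
have := gamt T (lexx T); rewrite ltr_norml => hb; apply/andP; split; lra.
Unshelve. all: by end_near.
Qed.

End ODE2.
Theorem lemma4p7 (R : realType) (S A : finType) (P : smdp_kernel R S A)
  (f : (S * A -> R) -> R) (alpha : R) :
  is_smdp_law P -> cond_M P -> weakly_communicating P -> cond_F f ->
  0 < alpha -> (forall sa, alpha <= tmean P sa) ->
  forall eps : R, 0 < eps -> exists delta : R, 0 < delta /\
    forall x : R -> S * A -> R,
      ode_solution (hfield P alpha f) x ->
      (exists q, hfield P alpha f q = (fun _ => 0) /\
                 supnorm (vsub (x 0) q) < delta) ->
      forall t : R, 0 <= t ->
        exists q, hfield P alpha f q = (fun _ => 0) /\
                  supnorm (vsub (x t) q) < eps.
Proof.
move=> HP _ HW HF Ha Ht eps eps0.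
have HF' := HF.
move: HF' => [[L HL] [Hsis _]].
have [Bd HBd] := zero_bounded HP HW HF Ha Ht.
pose eta := eps / 4.
have eta0 : 0 < eta by rewrite /eta divr_gt0.
pose Rb := `|Bd| + eta.
have Rb0 : 0 <= Rb by rewrite /Rb addr_ge0 // ltW.
have [rho rho0 Hrho] := unif_pos HL Hsis eta0 Rb0.
have L1 : 0 < `|L| + 1 by rewrite ltr_wpDl.
pose delta := Num.min (eps / 8) (rho / (4 * (`|L| + 1))).
have d1 : delta <= eps / 8 by rewrite /delta ge_min lexx.
have d2 : delta <= rho / (4 * (`|L| + 1)) by rewrite /delta ge_min lexx orbT.
have delta0 : 0 < delta.
  have a1 : 0 < eps / 8 by apply: divr_gt0 => //; lra.
  have a2 : 0 < rho / (4 * (`|L| + 1)).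
    by apply: divr_gt0 => //; apply: mulr_gt0 => //; lra.
  by rewrite /delta lt_min a1 a2.
have HLd : `|L| * (3 * delta) < rho.
  have h1 : `|L| * (3 * delta) <= (`|L| + 1) * (3 * delta).
    by apply: ler_wpM2r; [rewrite mulr_ge0 // ltW| rewrite lerDl].
  have h2 : (`|L| + 1) * (3 * delta) <= (`|L| + 1) * (3 * (rho / (4 * (`|L| + 1)))).
    by apply: ler_wpM2l; [exact: ltW| rewrite ler_pM2l].
  have h3 : (`|L| + 1) * (3 * (rho / (4 * (`|L| + 1)))) = 3 / 4 * rho.
    by field; rewrite gt_eqF.
  have h4 : 3 / 4 * rho < rho by rewrite gtr_pMl // ltr_pdivrMr //; lra.
  lra.
exists delta; split => // x sol [qs [Hq H0]] t t0.
exists qs; split => //.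
have H0' : forall i, `|x 0 i - qs i| < delta.
  by move=> i; apply: le_lt_trans (le_supnorm _ i) H0.
have Hbox : forall i, `|qs i| <= Rb.
  move=> i; apply: le_trans (HBd qs Hq i) _; rewrite /Rb.
  apply: le_trans (ler_norm Bd) _; rewrite lerDl; exact: ltW.
have Hup := Hrho qs Hbox.
pose qm := vadd qs (vscale (- eta) ones).
have Hbox' : forall i, `|qm i| <= Rb.
  move=> i; rewrite /qm /vadd /vscale /ones mulr1.
  apply: le_trans (ler_normD _ _) _; rewrite normrN (gtr0_norm eta0) /Rb lerD2r.
  apply: le_trans (HBd qs Hq i) _; exact: ler_norm.
have Hdn := Hrho qm Hbox'.
have eq : vadd qm (vscale eta ones) = qs.
  by apply: funext => i; rewrite /qm /vadd /vscale /ones; ring.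
rewrite eq in Hdn.
have main := ode_main HP Ha Ht HL Hsis Hq eta0 rho0 delta0 Hup Hdn HLd sol H0' t0.
apply: supnorm_lt => // i; apply: lt_le_trans (main i) _.
rewrite /eta; lra.
Qed.
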